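(* Let $\mathcal T$ be a theory of $\mathsf{LGIM}$, let $\alpha_1,\dots,\alpha_n,\beta$ be basic expressions ($n\ge1$) and $c_1,\dots,c_n,d\in[0,1]$, and assume that every element of $\tau(\alpha_1,c_1),\dots,\tau(\alpha_n,c_n)$ and of $\tau(\beta,d)$ is provable from $\mathcal T$ in $\mathsf{LGIM}$. Then for $r\in[0,1]$: if $r<1-\mathrm{avg}(c_1,\dots,c_n)+d$ then $\mathcal T\vdash_{\mathsf{LGIM}}\alpha_1,\dots,\alpha_n\Rightarrow_r\beta$, and if $r>1-\mathrm{avg}(c_1,\dots,c_n)+d$ then $\mathcal T\vdash_{\mathsf{LGIM}}\lnot(\alpha_1,\dots,\alpha_n\Rightarrow_r\beta)$.
   Context: Fix a continuous t-norm $\odot$ on $[0,1]$ and let $c\oplus d = 1-((1-c)\odot(1-d))$. Write $c\odot_{\L} d=\max(c+d-1,0)$, $c\oplus_{\L} d=\min(c+d,1)$, and $\mathrm{avg}(r_1,\dots,r_n)=(r_1+\dots+r_n)/n$. Basic expressions: built from countably many variables $\phi_0,\phi_1,\dots$ and constants $\bot,\top$ by binary $\land,\lor,\odot$ and unary $\sim$. A generalised graded implication is written $\alpha_1,\dots,\alpha_n\Rightarrow_c\beta$ where $n\ge1$, $\alpha_1,\dots,\alpha_n$ is a multiset of basic expressions, $\beta$ a basic expression, $c\in[0,1]$; for $n=1$ it is a graded implication $\alpha\Rightarrow_c\beta$. Formulas of $\mathsf{LGIM}$ are built from generalised graded implications by classical $\land,\lor,\lnot$; $\Phi\to\Psi$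 abbreviates $\lnot\Phi\lor\Psi$. A theory is a set of formulas. For a basic expression $\alpha$ and $c\in[0,1]$, $\tau(\alpha,c)=\{\top\Rightarrow_t\alpha : t\in[0,1],\ t<c\}\cup\{\alpha\Rightarrow_{1-t}\bot : t\in[0,1],\ t>c\}$. Calculus $\mathsf{LGIM}$: axioms are (i) all substitution instances (by generalised graded implications) of classical propositional tautologies; (ii) for all basic expressions $\alpha,\beta,\gamma$ and $c,d\in[0,1]$: ($\land_1$) $(\alpha\Rightarrow_d\beta)\land(\alpha\Rightarrow_d\gamma)\to(\alpha\Rightarrow_d\beta\land\gamma)$; ($\land_2$) $\alpha\land\beta\Rightarrow_1\alpha$; ($\land_3$) $\alpha\land\beta\Rightarrow_1\beta$; ($\lor_1$) $(\alpha\Rightarrow_d\gamma)\land(\beta\Rightarrow_d\gamma)\to(\alpha\lor\beta\Rightarrow_d\gamma)$; ($\lor_2$) $\alpha\Rightarrow_1\alpha\lor\beta$; ($\lor_3$) $\beta\Rightarrow_1\alpha\lor\beta$; ($\odot_1$) $(\top\Rightarrow_c\alpha)\land(\top\Rightarrow_d\beta)\to(\top\Rightarrow_{c\odot d}\alpha\odot\beta)$; ($\odot_2$) $(\alpha\Rightarrow_c\bot)\land(\beta\Rightarrow_d\bot)\to(\alpha\odot\beta\Rightarrow_{c\oplus d}\bot)$; ($\odot_3$) $\top\Rightarrow_1\top\odot\top$; ($\sim_1$) $(\alpha\Rightarrow_d\beta)\to(\sim\beta\Rightarrow_d\sim\alpha)$; ($\sim_2$) $\sim\sim\alpha\Rightarrow_1\alpha$;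 ($\sim_3$) $\alpha\Rightarrow_1\sim\sim\alpha$; ($\top$) $\alpha\Rightarrow_1\top$; ($\bot$) $\bot\Rightarrow_1\alpha$; (0) $\alpha\Rightarrow_0\beta$; ($c$) $\alpha\Rightarrow_c\alpha$; (inkons) $\lnot(\top\Rightarrow_c\bot)$ for $c>0$; (trans$_1$) $(\alpha\Rightarrow_c\beta)\land(\beta\Rightarrow_d\gamma)\to(\alpha\Rightarrow_{c\odot_{\L}d}\gamma)$; (trans$_2$) $(\alpha\Rightarrow_c\bot)\land(\top\Rightarrow_d\beta)\to(\alpha\Rightarrow_{c\oplus_{\L}d}\beta)$; (lin$_1$) $(\alpha\Rightarrow_1\beta)\lor(\beta\Rightarrow_1\alpha)$; (lin$_2$) $(\top\Rightarrow_d\alpha)\lor(\alpha\Rightarrow_{1-d}\bot)$; (iii) for all basic expressions $\alpha,\alpha_i,\beta_i,\beta,\gamma$ and $c,c_i,d\in[0,1]$: (trans$\varnothing_1$) $(\alpha_1\Rightarrow_{c_1}\beta_1)\land\dots\land(\alpha_n\Rightarrow_{c_n}\beta_n)\land(\beta_1,\dots,\beta_n\Rightarrow_d\gamma)\to(\alpha_1,\dots,\alpha_n\Rightarrow_{\mathrm{avg}(c_1,\dots,c_n)\odot_{\L}d}\gamma)$; (trans$\varnothing_2$) $(\alpha_1,\dots,\alpha_n\Rightarrow_c\beta)\land(\beta\Rightarrow_d\gamma)\to(\alpha_1,\dots,\alpha_n\Rightarrow_{c\odot_{\L}d}\gamma)$; (trans$\varnothing_3$) $(\alpha_1\Rightarrow_{c_1}\bot)\land\dots\land(\alpha_n\Rightarrow_{c_n}\bot)\land(\top\Rightarrow_d\beta)\to(\alpha_1,\dots,\alpha_n\Rightarrow_{\mathrm{avg}(c_1,\dots,c_n)\oplus_{\L}d}\beta)$;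 ($\top\varnothing$) $(\top,\dots,\top\Rightarrow_c\alpha)\to(\top\Rightarrow_c\alpha)$. The only rule is modus ponens. $\mathcal T\vdash_{\mathsf{LGIM}}\Phi$ means $\Phi$ has a finite derivation from axioms and elements of $\mathcal T$ by modus ponens. *)

(* Defs.v *)
From Stdlib Require Import Reals List Permutation.
Import ListNotations.
Open Scope R_scope.

Definition unit_iv (x : R) : Prop := 0 <= x <= 1.

Record is_cont_tnorm (tn : R -> R -> R) : Prop := {
  tn_range : forall x y, unit_iv x -> unit_iv y -> unit_iv (tn x y);
  tn_comm  : forall x y, unit_iv x -> unit_iv y -> tn x y = tn y x;
  tn_assoc : forall x y z, unit_iv x -> unit_iv y -> unit_iv z ->
               tn x (tn y z) = tn (tn x y) z;
  tn_mono  : forall x x' y, unit_iv x -> unit_iv x' -> unit_iv y ->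
               x <= x' -> tn x y <= tn x' y;
  tn_unit  : forall x, unit_iv x -> tn x 1 = x;
  tn_cont  : forall x y, unit_iv x -> unit_iv y ->
               forall eps, 0 < eps -> exists delta, 0 < delta /\
               forall x' y', unit_iv x' -> unit_iv y' ->
                 Rabs (x - x') < delta -> Rabs (y - y') < delta ->
                 Rabs (tn x y - tn x' y') < eps
}.

Definition tconorm (tn : R -> R -> R) (c d : R) : R := 1 - tn (1 - c) (1 - d).
Definition lmul (c d : R) : R := Rmax (c + d - 1) 0.
Definition ladd (c d : R) : R := Rmin (c + d) 1.
Definition avg (l : list R) : R := fold_right Rplus 0 l / INR (length l).

Definition grade : Type := {r : R | 0 <= r <= 1}.
Definition gv (g : grade) : R := proj1_sig g.

Inductive BExp : Type :=
| BVar  : nat -> BExp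
| BBot  : BExp
| BTop  : BExp
| BAnd  : BExp -> BExp -> BExp
| BOr   : BExp -> BExp -> BExp
| BOdot : BExp -> BExp -> BExp
| BNeg  : BExp -> BExp.

(** Generalised graded implication  a, as_1, ..., as_k  =>_c  b
    (antecedent multiset represented by the nonempty list a :: as_;
     permutations are identified via the axiom [ax_perm] below). *)
Inductive GImp : Type :=
| GI : BExp -> list BExp -> BExp -> grade -> GImp.

Inductive Formula : Type :=
| FAtom : GImp -> Formula
| FAnd  : Formula -> Formula -> Formula
| FOr   : Formula -> Formula -> Formula
| FNot  : Formula -> Formula.

Definition FImp (f g : Formula) : Formula := FOr (FNot f) g.

Definition imp1 (a b : BExp) (c : grade) : Formula := FAtom (GI a [] b c).

Definition conjs (last : Formula) (l : list Formula) : Formula :=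
  fold_right FAnd last l.

Fixpoint feval (v : GImp -> bool) (f : Formula) : bool :=
  match f with
  | FAtom g => v g
  | FAnd f1 f2 => andb (feval v f1) (feval v f2)
  | FOr f1 f2 => orb (feval v f1) (feval v f2)
  | FNot f1 => negb (feval v f1)
  end.

(** substitution instances of classical propositional tautologies
    = formulas true under every Boolean valuation of the atoms *)
Definition tautology (f : Formula) : Prop := forall v, feval v f = true.

Definition tr1 (t : BExp * grade * BExp) : BExp := fst (fst t).
Definition tr2 (t : BExp * grade * BExp) : grade := snd (fst t).
Definition tr3 (t : BExp * grade * BExp) : BExp := snd t.

Inductive Ax (tn : R -> R -> R) : Formula -> Prop :=
| ax_taut : forall f, tautology f -> Ax tn f
| ax_and1 : forall a b g d,
    Ax tn (FImp (FAnd (imp1 a b d) (imp1 a g d)) (imp1 a (BAnd b g) d))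
| ax_and2 : forall a b (one : grade), gv one = 1 -> Ax tn (imp1 (BAnd a b) a one)
| ax_and3 : forall a b (one : grade), gv one = 1 -> Ax tn (imp1 (BAnd a b) b one)
| ax_or1 : forall a b g d,
    Ax tn (FImp (FAnd (imp1 a g d) (imp1 b g d)) (imp1 (BOr a b) g d))
| ax_or2 : forall a b (one : grade), gv one = 1 -> Ax tn (imp1 a (BOr a b) one)
| ax_or3 : forall a b (one : grade), gv one = 1 -> Ax tn (imp1 b (BOr a b) one)
| ax_odot1 : forall a b c d (e : grade), gv e = tn (gv c) (gv d) ->
    Ax tn (FImp (FAnd (imp1 BTop a c) (imp1 BTop b d)) (imp1 BTop (BOdot a b) e))
| ax_odot2 : forall a b c d (e : grade), gv e = tconorm tn (gv c) (gv d) ->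
    Ax tn (FImp (FAnd (imp1 a BBot c) (imp1 b BBot d)) (imp1 (BOdot a b) BBot e))
| ax_odot3 : forall (one : grade), gv one = 1 ->
    Ax tn (imp1 BTop (BOdot BTop BTop) one)
| ax_neg1 : forall a b d,
    Ax tn (FImp (imp1 a b d) (imp1 (BNeg b) (BNeg a) d))
| ax_neg2 : forall a (one : grade), gv one = 1 -> Ax tn (imp1 (BNeg (BNeg a)) a one)
| ax_neg3 : forall a (one : grade), gv one = 1 -> Ax tn (imp1 a (BNeg (BNeg a)) one)
| ax_top : forall a (one : grade), gv one = 1 -> Ax tn (imp1 a BTop one)
| ax_bot : forall a (one : grade), gv one = 1 -> Ax tn (imp1 BBot a one)
| ax_zero : forall a b (z : grade), gv z = 0 -> Ax tn (imp1 a b z)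
| ax_refl : forall a c, Ax tn (imp1 a a c)
| ax_inkons : forall c, 0 < gv c -> Ax tn (FNot (imp1 BTop BBot c))
| ax_trans1 : forall a b g c d (e : grade), gv e = lmul (gv c) (gv d) ->
    Ax tn (FImp (FAnd (imp1 a b c) (imp1 b g d)) (imp1 a g e))
| ax_trans2 : forall a b c d (e : grade), gv e = ladd (gv c) (gv d) ->
    Ax tn (FImp (FAnd (imp1 a BBot c) (imp1 BTop b d)) (imp1 a b e))
| ax_lin1 : forall a b (one : grade), gv one = 1 ->
    Ax tn (FOr (imp1 a b one) (imp1 b a one))
| ax_lin2 : forall a d (e : grade), gv e = 1 - gv d ->
    Ax tn (FOr (imp1 BTop a d) (imp1 a BBot e))
| ax_transN1 : forall (t0 : BExp * grade * BExp) (ts : list (BExp * grade * BExp))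
      g d (e : grade),
    gv e = lmul (avg (map (fun t => gv (tr2 t)) (t0 :: ts))) (gv d) ->
    Ax tn (FImp
      (conjs (FAtom (GI (tr3 t0) (map tr3 ts) g d))
             (map (fun t => imp1 (tr1 t) (tr3 t) (tr2 t)) (t0 :: ts)))
      (FAtom (GI (tr1 t0) (map tr1 ts) g e)))
| ax_transN2 : forall a as_ b g c d (e : grade), gv e = lmul (gv c) (gv d) ->
    Ax tn (FImp (FAnd (FAtom (GI a as_ b c)) (imp1 b g d)) (FAtom (GI a as_ g e)))
| ax_transN3 : forall (p0 : BExp * grade) (ps : list (BExp * grade)) b d (e : grade),
    gv e = ladd (avg (map (fun p => gv (snd p)) (p0 :: ps))) (gv d) ->
    Ax tn (FImp
      (conjs (imp1 BTop b d) (map (fun p => imp1 (fst p) BBot (snd p)) (p0 :: ps)))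
      (FAtom (GI (fst p0) (map fst ps) b e)))
| ax_topN : forall (k : nat) a c,
    Ax tn (FImp (FAtom (GI BTop (repeat BTop k) a c)) (imp1 BTop a c))
(* antecedents form a multiset: permuted antecedent lists denote the same
   generalised graded implication *)
| ax_perm : forall a as_ a' as_' b c, Permutation (a :: as_) (a' :: as_') ->
    Ax tn (FImp (FAtom (GI a as_ b c)) (FAtom (GI a' as_' b c))).

Inductive Deriv (tn : R -> R -> R) (T : Formula -> Prop) : Formula -> Prop :=
| d_ax  : forall f, Ax tn f -> Deriv tn T f
| d_hyp : forall f, T f -> Deriv tn T f
| d_mp  : forall f g, Deriv tn T (FImp f g) -> Deriv tn T f -> Deriv tn T g.

Definition in_tau (a : BExp) (c : grade) (f : Formula) : Prop :=
  (exists t : grade, gv t < gv c /\ f = imp1 BTop a t) \/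
  (exists t e : grade, gv t > gv c /\ gv e = 1 - gv t /\ f = imp1 a BBot e).

Definition tau_provable (tn : R -> R -> R) (T : Formula -> Prop) (a : BExp) (c : grade)
  : Prop := forall f, in_tau a c f -> Deriv tn T f.

(* Main.v *)
Require Import Defs.
From Stdlib Require Import Reals List Lra.
Import ListNotations.
Open Scope R_scope.

Section H.
Variable tn : R -> R -> R.
Variable T : Formula -> Prop.

Lemma mp1sem f h : Deriv tn T f ->
  (forall v, feval v f = true -> feval v h = true) -> Deriv tn T h.
Proof.
  intros Hf Hs. apply (d_mp _ _ f h); [|exact Hf].
  apply d_ax, ax_taut. intro v. unfold FImp; simpl.
  specialize (Hs v). destruct (feval v f), (feval v h); simpl; auto.
Qed.

Lemma mp2sem f g h : Deriv tn T f -> Deriv tn T g ->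
  (forall v, feval v f = true -> feval v g = true -> feval v h = true) -> Deriv tn T h.
Proof.
  intros Hf Hg Hs. apply (d_mp _ _ g h); [|exact Hg].
  apply (d_mp _ _ f); [|exact Hf].
  apply d_ax, ax_taut. intro v. unfold FImp; simpl.
  specialize (Hs v). destruct (feval v f), (feval v g), (feval v h); simpl; auto.
Qed.

Lemma imp_trans f g h : Deriv tn T (FImp f g) -> Deriv tn T (FImp g h) -> Deriv tn T (FImp f h).
Proof.
  intros H1 H2. apply (mp2sem _ _ _ H1 H2). intro v; unfold FImp; simpl.
  destruct (feval v f), (feval v g), (feval v h); simpl; auto.
Qed.

Lemma conjs_imp f l : (forall x, In x l -> Deriv tn T x) -> Deriv tn T (FImp f (conjs f l)).
Proof.
  induction l as [|x l IH]; intros Hl; simpl.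
  - apply d_ax, ax_taut. intro v; unfold FImp; simpl. destruct (feval v f); auto.
  - assert (Hx : Deriv tn T x) by (apply Hl; left; auto).
    assert (Hr : Deriv tn T (FImp f (conjs f l))) by (apply IH; intros; apply Hl; right; auto).
    apply (mp2sem _ _ _ Hx Hr). intro v; unfold FImp; simpl.
    destruct (feval v f), (feval v x), (feval v (conjs f l)); simpl; auto.
Qed.

Lemma conjs_deriv f l : Deriv tn T f -> (forall x, In x l -> Deriv tn T x) -> Deriv tn T (conjs f l).
Proof.
  intros Hf Hl. apply (d_mp _ _ f); [apply conjs_imp; auto| exact Hf].
Qed.
End H.

Definition clamp x := Rmax 0 (Rmin x 1).
Lemma clamp_range x : 0 <= clamp x <= 1.
Proof. unfold clamp, Rmax, Rmin. repeat destruct Rle_dec; lra. Qed.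
Definition gcl x : grade := exist _ (clamp x) (clamp_range x).
Lemma gv_gcl x : 0 <= x <= 1 -> gv (gcl x) = x.
Proof. intros. unfold gv, gcl, clamp; simpl. unfold Rmax, Rmin. repeat destruct Rle_dec; lra. Qed.
Lemma gv_gcl0 x : x <= 0 -> gv (gcl x) = 0.
Proof. intros. unfold gv, gcl, clamp; simpl. unfold Rmax, Rmin. repeat destruct Rle_dec; lra. Qed.
Lemma gv_gcl_ge x : x <= 1 -> x <= gv (gcl x).
Proof. intros. unfold gv, gcl, clamp; simpl. unfold Rmax, Rmin. repeat destruct Rle_dec; lra. Qed.
Lemma gv_range (g : grade) : 0 <= gv g <= 1.
Proof. destruct g; simpl; auto. Qed.

Definition sumf {A} (f : A -> R) (l : list A) := fold_right Rplus 0 (map f l).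

Lemma sumf_lb {A} (f g : A -> R) a k l : (forall x, In x l -> a * f x + k <= g x) ->
  a * sumf f l + k * INR (length l) <= sumf g l.
Proof.
  induction l as [|x l IH]; intros H; unfold sumf in *; cbn [length fold_right map].
  - simpl; lra.
  - rewrite S_INR. assert (H1 := H x (or_introl eq_refl)).
    assert (H2 := IH (fun y Hy => H y (or_intror Hy))). lra.
Qed.
Lemma sumf_ub {A} (f g : A -> R) a k l : (forall x, In x l -> g x <= a * f x + k) ->
  sumf g l <= a * sumf f l + k * INR (length l).
Proof.
  induction l as [|x l IH]; intros H; unfold sumf in *; cbn [length fold_right map].
  - simpl; lra.
  - rewrite S_INR. assert (H1 := H x (or_introl eq_refl)).
    assert (H2 := IH (fun y Hy => H y (or_intror Hy))). lra.
Qed.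

Lemma avg_eq {A} (f : A -> R) l : avg (map f l) = sumf f l / INR (length l).
Proof. unfold avg, sumf. rewrite length_map. auto. Qed.

Lemma avg_lb {A} (f g : A -> R) a k (x0 : A) l : (forall x, In x (x0 :: l) -> a * f x + k <= g x) ->
  a * avg (map f (x0 :: l)) + k <= avg (map g (x0 :: l)).
Proof.
  intros H. rewrite !avg_eq. assert (Hn : 0 < INR (length (x0 :: l))).
  { simpl length. rewrite S_INR. pose proof (pos_INR (length l)). lra. }
  pose proof (sumf_lb f g a k _ H).
  apply (Rmult_le_reg_r (INR (length (x0 :: l)))); auto.
  unfold Rdiv. rewrite Rmult_plus_distr_r, Rmult_assoc, !Rmult_assoc, Rinv_l by lra. lra.
Qed.
Lemma avg_ub {A} (f g : A -> R) a k (x0 : A) l : (forall x, In x (x0 :: l) -> g x <= a * f x + k) ->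
  avg (map g (x0 :: l)) <= a * avg (map f (x0 :: l)) + k.
Proof.
  intros H. rewrite !avg_eq. assert (Hn : 0 < INR (length (x0 :: l))).
  { simpl length. rewrite S_INR. pose proof (pos_INR (length l)). lra. }
  pose proof (sumf_ub f g a k _ H).
  apply (Rmult_le_reg_r (INR (length (x0 :: l)))); auto.
  unfold Rdiv. rewrite Rmult_plus_distr_r, Rmult_assoc, !Rmult_assoc, Rinv_l by lra. lra.
Qed.

Lemma avg_range {A} (g : A -> R) (x0 : A) l : (forall x, In x (x0 :: l) -> 0 <= g x <= 1) ->
  0 <= avg (map g (x0 :: l)) <= 1.
Proof.
  intros H. split.
  - pose proof (avg_lb g g 0 0 x0 l). assert (H1: 0 * avg (map g (x0::l)) + 0 <= avg (map g (x0::l))).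
    { apply H0. intros x Hx; specialize (H x Hx); lra. } lra.
  - pose proof (avg_ub g g 0 1 x0 l). assert (H1: avg (map g (x0::l)) <= 0 * avg (map g (x0::l)) + 1).
    { apply H0. intros x Hx; specialize (H x Hx); lra. } lra.
Qed.

Lemma map_const_repeat {A B} (x : B) (l : list A) : map (fun _ => x) l = repeat x (length l).
Proof. induction l; simpl; f_equal; auto. Qed.

Lemma and_intro tn T f g : Deriv tn T f -> Deriv tn T g -> Deriv tn T (FAnd f g).
Proof.
  intros Hf Hg. apply (mp2sem _ _ _ _ _ Hf Hg). intro v; simpl.
  destruct (feval v f), (feval v g); simpl; auto.
Qed.

Lemma weaken tn T a as_ b (s r : grade) : gv r <= gv s ->
  Deriv tn T (FAtom (GI a as_ b s)) -> Deriv tn T (FAtom (GI a as_ b r)).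
Proof.
  intros Hrs Hs. pose proof (gv_range r). pose proof (gv_range s).
  set (k := gcl (1 - gv s + gv r)).
  assert (Hk : gv k = 1 - gv s + gv r) by (apply gv_gcl; lra).
  assert (He : gv r = lmul (gv s) (gv k)).
  { rewrite Hk. unfold lmul, Rmax. destruct Rle_dec; lra. }
  pose proof (d_ax tn T _ (ax_transN2 tn a as_ b b s k r He)) as Htw.
  eapply d_mp; [exact Htw|]. apply and_intro; auto. apply d_ax, ax_refl.
Qed.

Theorem mainTheorem8 (tn : R -> R -> R) (Htn : is_cont_tnorm tn)
    (T : Formula -> Prop)
    (a0 : BExp) (c0 : grade) (rest : list (BExp * grade)) (b : BExp) (d : grade) :
  (forall p, In p ((a0, c0) :: rest) -> tau_provable tn T (fst p) (snd p)) ->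
  tau_provable tn T b d ->
  forall r : grade,
    (gv r < 1 - avg (map (fun p => gv (snd p)) ((a0, c0) :: rest)) + gv d ->
       Deriv tn T (FAtom (GI a0 (map fst rest) b r))) /\
    (gv r > 1 - avg (map (fun p => gv (snd p)) ((a0, c0) :: rest)) + gv d ->
       Deriv tn T (FNot (FAtom (GI a0 (map fst rest) b r)))).
Proof.
  intros HL Hb r.
  set (L := (a0, c0) :: rest).
  set (C := avg (map (fun p => gv (snd p)) L)).
  assert (HC : 0 <= C <= 1).
  { apply avg_range. intros; apply gv_range. }
  pose proof (gv_range r) as Hr01. pose proof (gv_range d) as Hd01.
  split; intro Hr.
  - set (eps := (1 - C + gv d - gv r) / 3).
    assert (Heps : 0 < eps) by (unfold eps; lra).
    set (ef := fun c : grade => gcl (1 - gv c - eps)).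
    set (G := fun p : BExp * grade => (fst p, ef (snd p))).
    assert (Hef : forall p, In p L -> Deriv tn T (imp1 (fst p) BBot (ef (snd p)))).
    { intros p Hp. pose proof (gv_range (snd p)).
      destruct (Rle_dec (1 - gv (snd p) - eps) 0).
      - apply d_ax, ax_zero. apply gv_gcl0; auto.
      - apply (HL p Hp). right. exists (gcl (gv (snd p) + eps)), (ef (snd p)).
        rewrite gv_gcl by lra. split; [lra|]. split; [|reflexivity].
        unfold ef. rewrite gv_gcl by lra. lra. }
    set (dd := gcl (gv d - eps)).
    assert (Hdd : Deriv tn T (imp1 BTop b dd)).
    { destruct (Rle_dec (gv d - eps) 0).
      - apply d_ax, ax_zero. apply gv_gcl0; auto.
      - apply Hb. left. exists dd. split; [|reflexivity]. unfold dd. rewrite gv_gcl by lra. lra. }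
    set (A := avg (map (fun p => gv (snd p)) (map G L))).
    assert (HA : 0 <= A <= 1).
    { unfold A. rewrite map_map. apply avg_range. intros; apply gv_range. }
    assert (HAlb : -1 * C + (1 - eps) <= A).
    { unfold A, C. rewrite map_map. apply avg_lb. intros x _. simpl.
      pose proof (gv_range (snd x)). assert (Hg := gv_gcl_ge (1 - gv (snd x) - eps) ltac:(lra)). unfold G, ef; simpl in *. lra. }
    assert (Hddlb : gv d - eps <= gv dd) by (apply gv_gcl_ge; lra).
    pose proof (gv_range dd).
    set (E := gcl (ladd A (gv dd))).
    assert (HE : gv E = ladd A (gv dd)).
    { apply gv_gcl. unfold ladd, Rmin. destruct Rle_dec; lra. }
    pose proof (d_ax tn T _ (ax_transN3 tn (G (a0, c0)) (map G rest) b dd E HE)) as H3.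
    assert (H4 := d_mp _ _ _ _ H3).
    assert (H5 : Deriv tn T (FAtom (GI a0 (map fst rest) b E))).
    { replace (map fst rest) with (map fst (map G rest)).
      2:{ rewrite map_map. apply map_ext. reflexivity. }
      apply H4. apply conjs_deriv; auto.
      intros x Hx. apply in_map_iff in Hx. destruct Hx as [p' [Hp' Hin]]. subst x.
      change (G (a0, c0) :: map G rest) with (map G L) in Hin.
      apply in_map_iff in Hin. destruct Hin as [p [Hp Hin]]. subst p'. simpl.
      apply Hef; auto. }
    apply (weaken _ _ _ _ _ E); auto.
    assert (Heq3 : 3 * eps = 1 - C + gv d - gv r) by (unfold eps; field). rewrite HE. unfold ladd, Rmin. destruct Rle_dec; lra.
  - set (delta := gv r - 1 + C - gv d).
    assert (Hdelta : 0 < delta) by (unfold delta; lra).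
    set (eps := delta / 3).
    assert (Heps : 0 < eps) by (unfold eps; lra).
    assert (Hdeps : gv d + eps < 1) by (unfold eps, delta; lra).
    set (tf := fun c : grade => gcl (gv c - eps)).
    set (H := fun p : BExp * grade => (BTop, tf (snd p), fst p)).
    assert (Htf : forall p, In p L -> Deriv tn T (imp1 BTop (fst p) (tf (snd p)))).
    { intros p Hp. pose proof (gv_range (snd p)).
      destruct (Rle_dec (gv (snd p) - eps) 0).
      - apply d_ax, ax_zero. apply gv_gcl0; auto.
      - apply (HL p Hp). left. exists (tf (snd p)). split; [|reflexivity].
        unfold tf. rewrite gv_gcl by lra. lra. }
    set (A := avg (map (fun t => gv (tr2 t)) (map H L))).
    assert (HA : 0 <= A <= 1).
    { unfold A. rewrite map_map. apply avg_range. intros; apply gv_range. }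
    assert (HAlb : 1 * C + - eps <= A).
    { unfold A, C. rewrite map_map. apply avg_lb. intros x _. simpl.
      pose proof (gv_range (snd x)). assert (Hg := gv_gcl_ge (gv (snd x) - eps) ltac:(lra)). unfold tr2; simpl in *. lra. }
    set (e1 := gcl (lmul A (gv r))).
    assert (He1 : gv e1 = lmul A (gv r)).
    { apply gv_gcl. unfold lmul, Rmax. destruct Rle_dec; lra. }
    pose proof (d_ax tn T _ (ax_transN1 tn (H (a0, c0)) (map H rest) b r e1 He1)) as HN1.
    set (X := FAtom (GI a0 (map fst rest) b r)).
    set (Lst := map (fun t => imp1 (tr1 t) (tr3 t) (tr2 t)) (map H L)).
    change (Deriv tn T (FImp (conjs (FAtom (GI a0 (map tr3 (map H rest)) b r)) Lst)
        (FAtom (GI BTop (map tr1 (map H rest)) b e1)))) in HN1.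
    replace (map tr3 (map H rest)) with (map fst rest) in HN1
      by (rewrite map_map; apply map_ext; reflexivity).
    replace (map tr1 (map H rest)) with (repeat BTop (length rest)) in HN1
      by (rewrite map_map; unfold tr1; simpl; rewrite map_const_repeat; reflexivity).
    assert (HA1 : Deriv tn T (FImp X (conjs X Lst))).
    { apply conjs_imp. intros x Hx. apply in_map_iff in Hx. destruct Hx as [p' [Hp' Hin]]. subst x.
      apply in_map_iff in Hin. destruct Hin as [p [Hp Hin]]. subst p'.
      apply Htf; auto. }
    pose proof (d_ax tn T _ (ax_topN tn (length rest) b e1)) as HtopN.
    set (t' := gcl (gv d + eps)). set (e' := gcl (1 - (gv d + eps))).
    assert (Ht' : gv t' = gv d + eps) by (apply gv_gcl; lra).
    assert (He' : gv e' = 1 - (gv d + eps)) by (apply gv_gcl; lra).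
    assert (HQ : Deriv tn T (imp1 b BBot e')).
    { apply Hb. right. exists t', e'. rewrite Ht', He'. split; [lra|]. split; [lra|reflexivity]. }
    pose proof (gv_range e1).
    set (e2 := gcl (lmul (gv e1) (gv e'))).
    assert (He2 : gv e2 = lmul (gv e1) (gv e')).
    { apply gv_gcl. unfold lmul, Rmax. destruct Rle_dec; lra. }
    pose proof (d_ax tn T _ (ax_trans1 tn BTop b BBot e1 e' e2 He2)) as Htr1.
    assert (Hpos : 0 < gv e2).
    { rewrite He2, He', He1. unfold lmul. 
      assert (Hm : A + gv r - 1 <= Rmax (A + gv r - 1) 0) by apply Rmax_l.
      eapply Rlt_le_trans; [|apply Rmax_l]. assert (Heq3 : 3 * eps = delta) by (unfold eps; field). unfold delta in Heq3. lra. }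
    pose proof (d_ax tn T _ (ax_inkons tn e2 Hpos)) as Hink.
    pose proof (imp_trans _ _ _ _ _ (imp_trans _ _ _ _ _ HA1 HN1) HtopN) as HXB.
    assert (HXQ : Deriv tn T (FImp X (FAnd (imp1 BTop b e1) (imp1 b BBot e')))).
    { apply (mp2sem _ _ _ _ _ HXB HQ). intro v; unfold FImp; simpl.
      repeat match goal with |- context[v ?g] => destruct (v g) end; simpl; auto. }
    pose proof (imp_trans _ _ _ _ _ HXQ Htr1) as HXZ.
    apply (mp2sem _ _ _ _ _ HXZ Hink). intro v; unfold FImp; simpl.
    repeat match goal with |- context[v ?g] => destruct (v g) end; simpl; auto.
Qed.
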